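(* Let $f \colon \mathbb{R} \to \mathbb{R}$ be given by $f(x) = \ln\big(\frac{\sinh x}{x}\big) - \frac{x^2}{6}$ for $x \neq 0$ and $f(0) = 0$. Then $$\frac{f(q)}{p} - \frac{f(p)}{q} + \Big(\frac{1}{q} - \frac{1}{p}\Big) f(p-q) \ge 0$$ for all $p, q \in \mathbb{R} \setminus \{0\}$ with $q \le p$. For $p, q \in \mathbb{R}\setminus\{0\}$ with $p \le q$, the reverse inequality ($\le 0$) holds. *)

(* Defs.v *)
From Stdlib Require Import Reals.
Open Scope R_scope.

Definition fsh (x : R) : R :=
  if Req_EM_T x 0 then 0 else ln (sinh x / x) - x ^ 2 / 6.

(* Main.v *)
Require Import Defs.
From Stdlib Require Import Reals Lra.
From Coquelicot Require Import Coquelicot.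
Open Scope R_scope.

Lemma sinh_pos x : 0 < x -> 0 < sinh x.
Proof. intros; rewrite <- sinh_0; now apply sinh_lt. Qed.

Definition kf x := x * cosh x - sinh x.
Definition hf x := (3 + x^2) * sinh x - 3 * x * cosh x.

Lemma kf_der x : is_derive kf x (x * sinh x).
Proof. unfold kf, sinh, cosh. auto_derive; auto. field. Qed.
Lemma hf_der x : is_derive hf x (x * kf x).
Proof. unfold hf, kf, sinh, cosh. auto_derive; auto. field. Qed.

Lemma mono_nonneg (f df : R -> R) (y : R) :
  (forall x, is_derive f x (df x)) -> (forall x, 0 <= x -> 0 <= df x) ->
  0 <= y -> f 0 <= f y.
Proof.
  intros Hd Hp Hy.
  destruct (MVT_gen f 0 y df) as [c [Hc He]].
  - intros; apply Hd.
  - intros; apply continuity_pt_filterlim; apply (ex_derive_continuous f). eexists; apply Hd.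
  - rewrite Rmin_left in Hc by lra. rewrite Rmax_right in Hc by lra.
    assert (0 <= df c) by (apply Hp; lra). nra.
Qed.

Lemma kf_nonneg x : 0 <= x -> 0 <= kf x.
Proof.
  intros Hx. replace 0 with (kf 0) at 1 by (unfold kf, sinh, cosh; rewrite Ropp_0; field).
  apply (mono_nonneg kf (fun x => x * sinh x)); auto using kf_der.
  intros t Ht. destruct (Req_dec t 0). subst; lra. pose proof (sinh_pos t). nra.
Qed.

Lemma hf_nonneg x : 0 <= x -> 0 <= hf x.
Proof.
  intros Hx. replace 0 with (hf 0) at 1 by (unfold hf, sinh, cosh; rewrite Ropp_0; field).
  apply (mono_nonneg hf (fun x => x * kf x)); auto using hf_der.
  intros t Ht. pose proof (kf_nonneg t Ht). nra.
Qed.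

Definition F x := ln (sinh x / x) - x ^ 2 / 6.
Definition dF x := (x * cosh x - sinh x) / (x * sinh x) - x / 3.

Lemma F_der x : 0 < x -> is_derive F x (dF x).
Proof.
  intros Hx. pose proof (sinh_pos x Hx) as Hs.
  unfold F, dF. unfold sinh, cosh in *. auto_derive.
  - repeat split; try lra. apply Rdiv_lt_0_compat; lra.
  - field. split; lra.
Qed.

Lemma dF_nonpos x : 0 < x -> dF x <= 0.
Proof.
  intros Hx. pose proof (sinh_pos x Hx) as Hs. pose proof (hf_nonneg x (Rlt_le _ _ Hx)).
  unfold hf in *.
  assert (dF x = - ((3 + x^2) * sinh x - 3 * x * cosh x) / (3 * (x * sinh x))).
  { unfold dF. field. split; lra. }
  rewrite H0. assert (0 < 3 * (x * sinh x)) by nra.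
  assert (0 <= ((3 + x^2) * sinh x - 3 * x * cosh x) / (3 * (x * sinh x))).
  { unfold Rdiv; apply Rmult_le_pos; [lra | left; apply Rinv_0_lt_compat; lra]. }
  unfold Rdiv in *. rewrite Ropp_mult_distr_l_reverse. lra.
Qed.

Lemma F_dec x y : 0 < x -> x <= y -> F y <= F x.
Proof.
  intros Hx Hxy.
  destruct (MVT_gen F x y dF) as [c [Hc He]].
  - intros t Ht. rewrite Rmin_left in Ht by lra. apply F_der; lra.
  - intros t Ht. rewrite Rmin_left in Ht by lra.
    apply continuity_pt_filterlim; apply (ex_derive_continuous F). eexists; apply F_der; lra.
  - rewrite Rmin_left in Hc by lra. assert (dF c <= 0) by (apply dF_nonpos; lra). nra.
Qed.

Lemma fsh_pos x : 0 < x -> fsh x = F x.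
Proof. intros. unfold fsh, F. destruct (Req_EM_T x 0); [lra | reflexivity]. Qed.

Lemma fsh_even x : fsh (- x) = fsh x.
Proof.
  unfold fsh. destruct (Req_EM_T (-x) 0); destruct (Req_EM_T x 0); try lra; auto.
  f_equal. f_equal. unfold sinh. rewrite Ropp_involutive. field. auto. field.
Qed.

Lemma g_sub a b : 0 <= a -> 0 <= b -> (a + b) * fsh (a + b) <= a * fsh a + b * fsh b.
Proof.
  intros Ha Hb. destruct (Req_dec a 0). subst. rewrite Rplus_0_l. lra.
  destruct (Req_dec b 0). subst. rewrite Rplus_0_r. lra.
  rewrite !fsh_pos by lra.
  assert (F (a+b) <= F a) by (apply F_dec; lra).
  assert (F (a+b) <= F b) by (apply F_dec; lra). nra.
Qed.

Lemma sgn1 E c : 0 < c -> 0 <= E * c -> E >= 0.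
Proof. intros. destruct (Rlt_or_le E 0); [|lra]. assert (E * c < 0) by (apply Rmult_neg_pos; auto). lra. Qed.
Lemma sgn2 E c : c < 0 -> E * c <= 0 -> E >= 0.
Proof. intros. destruct (Rlt_or_le E 0); [|lra]. assert (0 < E * c) by (apply Rmult_neg_neg; auto). lra. Qed.

Lemma part1 p q : p <> 0 -> q <> 0 -> q <= p ->
     fsh q / p - fsh p / q + (1 / q - 1 / p) * fsh (p - q) >= 0.
Proof.
  intros Hp Hq Hqp.
  set (E := fsh q / p - fsh p / q + (1 / q - 1 / p) * fsh (p - q)).
  assert (HE : E * (p * q) = q * fsh q + (p - q) * fsh (p - q) - p * fsh p)
    by (unfold E; field; auto).
  destruct (Rlt_or_le 0 q) as [Hq0|Hq0].
  - pose proof (g_sub q (p - q) ltac:(lra) ltac:(lra)) as G. replace (q + (p - q)) with p in G by ring.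
    apply (sgn1 E (p*q)); [apply Rmult_lt_0_compat; lra | rewrite HE; lra].
  - assert (Hqn : q < 0) by (destruct (Rle_lt_or_eq_dec q 0 Hq0); [auto|contradiction]).
    destruct (Rlt_or_le 0 p) as [Hp0|Hp0].
    + pose proof (g_sub p (-q) ltac:(lra) ltac:(lra)) as G. replace (p + - q) with (p - q) in G by ring.
      rewrite fsh_even in G.
      apply (sgn2 E (p*q)); [apply Rmult_pos_neg; lra | rewrite HE; lra].
    + assert (Hpn : p < 0) by (destruct (Rle_lt_or_eq_dec p 0 Hp0); [auto|contradiction]).
       pose proof (g_sub (-p) (p - q) ltac:(lra) ltac:(lra)) as G. replace (- p + (p - q)) with (- q) in G by ring.
      rewrite !fsh_even in G.
      apply (sgn1 E (p*q)); [apply Rmult_neg_neg; lra | rewrite HE; lra].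
Qed.

Theorem mainTheorem3 :
  (forall p q : R, p <> 0 -> q <> 0 -> q <= p ->
     fsh q / p - fsh p / q + (1 / q - 1 / p) * fsh (p - q) >= 0) /\
  (forall p q : R, p <> 0 -> q <> 0 -> p <= q ->
     fsh q / p - fsh p / q + (1 / q - 1 / p) * fsh (p - q) <= 0).
Proof.
  split. exact part1.
  intros p q Hp Hq Hpq.
  pose proof (part1 (-p) (-q)) as H.
  replace (- p - - q) with (- (p - q)) in H by ring.
  rewrite !fsh_even in H.
  assert (fsh q / - p - fsh p / - q + (1 / - q - 1 / - p) * fsh (p - q)
          = - (fsh q / p - fsh p / q + (1 / q - 1 / p) * fsh (p - q))) by (field; auto).
  rewrite H0 in H. assert (- p <> 0) by (intro; apply Hp; lra). assert (- q <> 0) by (intro; apply Hq; lra).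
  specialize (H H1 H2 ltac:(lra)). lra.
Qed.
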